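(* Let $n\geq 2$ be an integer and let $m\neq\pm1$ be a square-free integer. Let $\sqrt[n]{m}$ denote a root of $X^n-m$. Then every algebraic integer in $\mathbb{Q}(\sqrt[n]{m})$ can be written in the basis $(1,\sqrt[n]{m},\ldots,\sqrt[n]{m^{n-1}})$ with rational coefficients having a denominator $d$ satisfying $\gcd(d,m)=1$.
   Context: Here $\sqrt[n]{m^{j}}$ means $(\sqrt[n]{m})^{j}$. Since $m$ is square-free and $m\neq\pm1$, $X^n-m$ is irreducible over $\mathbb{Q}$, so $(1,\sqrt[n]{m},\ldots,\sqrt[n]{m^{n-1}})$ is a $\mathbb{Q}$-basis of $\mathbb{Q}(\sqrt[n]{m})$. *)

(* Defs.v *)
From mathcomp Require Import all_boot all_order all_algebra all_field.
Set Implicit Arguments. Unset Strict Implicit. Unset Printing Implicit Defensive.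
Import Order.TTheory GRing.Theory Num.Theory.

(* An integer m is square-free iff no square of a prime divides it
   (so 0 is not square-free). *)
Definition squarefree_int (m : int) : Prop :=
  forall p : nat, prime p -> ~~ (p * p %| `|m|)%N.

(* Main.v *)
Require Import Defs.
From mathcomp Require Import all_boot all_order all_algebra all_field.
Import Order.TTheory GRing.Theory Num.Theory.
From mathcomp Require Import zify ring.
Local Open Scope ring_scope.
Lemma theta_Aint (n : nat) (m : int) (t : algC) :
  (0 < n)%N -> t ^+ n = m%:~R -> t \in Aint.
Proof.
move=> n0 tn.
apply: (@root_monic_Aint ('X^n - (m%:~R)%:P)).
- by rewrite /root !hornerE tn subrr.
- by rewrite monicXnsubC.
- by rewrite polyOverXnsubC intr_int.
Qed.

Lemma int_rat_Aint (q : int) (k : nat) :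
  (q%:~R / k%:R : algC) \in Aint -> exists z : int, (q%:~R / k%:R : algC) = z%:~R.
Proof.
move=> H.
have : (q%:~R / k%:R : algC) \in Crat by rewrite rpred_div ?rpred_int ?rpred_nat.
move=> /Cint_rat_Aint /(_ H) /intrP [z ->]; by exists z.
Qed.


Lemma core (n : nat) (m : int) (t : algC) (p e : nat) (b : nat -> int) :
  (0 < n)%N -> t ^+ n = m%:~R -> prime p -> (p %| `|m|)%N ->
  ~~ (p * p %| `|m|)%N -> (0 < e)%N ->
  \sum_(i < n) ((b i)%:~R / (p * e)%:R) * t ^+ i \in Aint ->
  forall i, (i < n)%N -> (p%:Z %| b i)%Z.
Proof.
move=> n0 tn pp pm pm2 e0 xA.
have tA := @theta_Aint n m t n0 tn.
have pR : (p%:R : algC) != 0 by rewrite pnatr_eq0 -lt0n prime_gt0.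
have eR : (e%:R : algC) != 0 by rewrite pnatr_eq0 -lt0n.
suff: ~ exists i, (i < n)%N && ~~ (p%:Z %| b i)%Z.
  move=> H i lt; apply/negPn/negP => nd; apply: H; exists i; by rewrite lt nd.
case/ex_minnP => j /andP[jn nbj] jmin.
have blow : forall k, (k < j)%N -> (p%:Z %| b k)%Z.
  move=> k kj; apply/negPn/negP => nk.
  have := jmin k; rewrite nk (ltn_trans kj jn) => /(_ isT); by rewrite leqNgt kj.
have [m' Em] : exists m' : int, m = m' * p.
  by exists (m %/ p)%Z; rewrite divzK // dvdzE.
pose F i := (b i)%:~R / p%:R * t ^+ i : algC.
have yA : \sum_(0 <= i < n) F i \in Aint.
  have -> : \sum_(0 <= i < n) F i = e%:R * \sum_(i < n) ((b i)%:~R / (p * e)%:R) * t ^+ i.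
    rewrite big_mkord mulr_sumr; apply: eq_bigr => i _; rewrite /F natrM; field.
    by rewrite pR eR.
  by rewrite rpredM ?rpred_nat.
have lowA : \sum_(0 <= i < j) F i \in Aint.
  rewrite big_mkord; apply: rpred_sum => i _.
  rewrite /F; have /divzK <- := blow i (ltn_ord i).
  rewrite rmorphM /= -pmulrn mulfK //.
  by rewrite rpredM ?rpred_int ?rpredX.
have zA : \sum_(j <= i < n) F i \in Aint.
  move: yA; rewrite (@big_cat_nat _ _ _ j 0 n _ _ (leq0n j) (ltnW jn)) /=.
  move=> yA; have := rpredB yA lowA; by rewrite addrAC subrr add0r.
rewrite big_ltn // in zA.
set R := \sum_(j.+1 <= i < n) F i in zA.
have RA : R * t ^+ (n - j.+1) \in Aint.
  rewrite /R -(add0n j.+1) big_addn mulr_suml big_mkord; apply: rpred_sum => i _.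
  rewrite /F add0n -[_ / _ * _ * _]mulrA -exprD -addnA subnKC // exprD tn Em rmorphM /= -pmulrn.
  have -> : (b (i + j.+1)%N)%:~R / p%:R * (t ^+ i * (m'%:~R * p%:R))
      = (b (i + j.+1)%N)%:~R * m'%:~R * t ^+ i :> algC by field; rewrite pR.
  by rewrite !rpredM ?rpredX ?rpred_int.
have wA : F j * t ^+ (n - j.+1) \in Aint.
  have := rpredM zA (rpredX (n - j.+1) tA); rewrite mulrDl => H.
  by have := rpredB H RA; rewrite addrK.
have wnA : ((b j ^+ n * m ^+ n.-1)%:~R / (p ^ n)%N%:R : algC) \in Aint.
  suff -> : ((b j ^+ n * m ^+ n.-1)%:~R / (p ^ n)%N%:R : algC)
     = (F j * t ^+ (n - j.+1)) ^+ n by rewrite rpredX.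
  have Ej : (j + (n - j.+1) = n.-1)%N by lia.
  rewrite /F -[_ / _ * _ * _]mulrA -exprD Ej exprMn expr_div_n -exprM mulnC exprM tn.
  by rewrite rmorphM /= !rmorphXn /= mulrAC.
case: (int_rat_Aint _ _ wnA) => z Ez.
have Eint : b j ^+ n * m ^+ n.-1 = z * (p ^ n)%N%:Z.
  have Pn : ((p ^ n)%N%:R : algC) != 0 by rewrite natrX expf_neq0.
  apply: (@intr_inj algC); rewrite [RHS]rmorphM /=.
  by rewrite -(divfK Pn ((b j ^+ n * m ^+ n.-1)%:~R)) Ez pmulrn.
have bj0 : (0 < `|b j|)%N.
  by rewrite absz_gt0; apply: contraNneq nbj => ->; rewrite dvdz0.
have m0 : (0 < `|m|)%N.
  by rewrite absz_gt0; apply: contraNneq pm2 => ->; rewrite dvdn0.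
have : (p ^ n %| `|b j| ^ n * `|m| ^ n.-1)%N.
  apply/dvdnP; exists `|z|%N; have := congr1 absz Eint.
  by rewrite !abszM !abszX /= => ->.
rewrite pfactor_dvdn // ?muln_gt0 ?expn_gt0 ?bj0 ?m0 // lognM ?expn_gt0 ?bj0 ?m0 //.
rewrite !lognX logn_coprime; last by rewrite prime_coprime // -(absz_nat p) -dvdzE.
have h1 : (1 <= logn p `|m|)%N by rewrite -pfactor_dvdn // expn1.
have h2 : ~~ (2 <= logn p `|m|)%N by rewrite -pfactor_dvdn.
have -> : logn p `|m| = 1%N.
  by apply/eqP; rewrite eqn_leq h1 andbT -ltnS ltnNge h2.
by rewrite muln0 muln1 add0n leqNgt ltn_predL n0.
Qed.

Definition Pd (n : nat) (t x : algC) (d : nat) :=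
  exists b : nat -> int, x = \sum_(i < n) ((b i)%:~R / d%:R) * t ^+ i.

Lemma descent (n : nat) (m : int) (t x : algC) (p e : nat) :
  (0 < n)%N -> t ^+ n = m%:~R -> prime p -> (p %| `|m|)%N ->
  ~~ (p * p %| `|m|)%N -> (0 < e)%N -> x \in Aint ->
  Pd n t x (p * e) -> Pd n t x e.
Proof.
move=> n0 tn pp pm pm2 e0 xA [b Ex].
have pR : (p%:R : algC) != 0 by rewrite pnatr_eq0 -lt0n prime_gt0.
have eR : (e%:R : algC) != 0 by rewrite pnatr_eq0 -lt0n.
have H := @core n m t p e b n0 tn pp pm pm2 e0 (eq_ind x (fun y => y \in Aint) xA _ Ex).
exists (fun k => (b k %/ p)%Z); rewrite Ex; apply: eq_bigr => i _.
rewrite -{1}(divzK (H i (ltn_ord i))) rmorphM /= -pmulrn natrM; field.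
by rewrite pR eR.
Qed.

Lemma reduce (n : nat) (m : int) (t x : algC) :
  (0 < n)%N -> t ^+ n = m%:~R -> squarefree_int m -> x \in Aint ->
  forall d, (0 < d)%N -> Pd n t x d ->
  exists d', [/\ (0 < d')%N, coprime d' `|m|%N & Pd n t x d'].
Proof.
move=> n0 tn sqf xA d; elim/ltn_ind: d => d IH d0 Pdd.
have [cop|ncop] := boolP (coprime d `|m|); first by exists d.
set g := gcdn d `|m|.
have g1 : (1 < g)%N.
  have : (0 < g)%N by rewrite gcdn_gt0 d0.
  by move: ncop; rewrite /coprime -/g; case: g => [|[|]].
have pp := pdiv_prime g1.
set p := pdiv g in pp.
have pd : (p %| d)%N := dvdn_trans (pdiv_dvd g) (dvdn_gcdl _ _).
have pm : (p %| `|m|)%N := dvdn_trans (pdiv_dvd g) (dvdn_gcdr _ _).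
have Ed : d = (p * (d %/ p))%N by rewrite mulnC divnK.
have e0 : (0 < d %/ p)%N by rewrite divn_gt0 ?prime_gt0 // dvdn_leq.
apply: (IH (d %/ p)%N) => //; first by rewrite ltn_Pdiv ?prime_gt1.
apply: (@descent n m t x p (d %/ p)%N n0 tn pp pm (sqf p pp) e0 xA); by rewrite -Ed.
Qed.

Theorem corollary2p2 (n : nat) (m : int) (theta : algC) :
  (2 <= n)%N -> squarefree_int m -> m != 1 -> m != -1 ->
  theta ^+ n = m%:~R ->
  forall x : algC,
    (exists c : 'I_n -> rat, x = \sum_(i < n) ratr (c i) * theta ^+ i) ->
    x \in Aint ->
    exists (d : nat) (a : 'I_n -> int),
      [/\ (0 < d)%N, coprime d `|m|%N &
          x = \sum_(i < n) ((a i)%:~R / d%:R) * theta ^+ i].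
Proof.
move=> n2 sqf _ _ tn x [c Ex] xA.
have n0 : (0 < n)%N by apply: leq_trans n2.
suff [d [d0 cop [b Eb]]] : exists d', [/\ (0 < d')%N, coprime d' `|m|%N & Pd n theta x d'].
  by exists d, (fun i => b i).
apply: (@reduce n m theta x n0 tn sqf xA (\prod_(i < n) `|denq (c i)|%N)).
  by rewrite prodn_gt0 // => i; rewrite absz_gt0 denq_neq0.
move: c Ex; case: n n2 n0 tn => // n' _ _ tn c Ex.
set D := (\prod_(i < n'.+1) `|denq (c i)|)%N.
exists (fun k => numq (c (inord k)) * (D %/ `|denq (c (inord k))|)%N%:Z).
rewrite Ex; apply: eq_bigr => i _; rewrite inord_val; congr (_ * _).
have dvd : (`|denq (c i)| %| D)%N by rewrite /D (bigD1 i) //= dvdn_mulr.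
have Dd : D = ((D %/ `|denq (c i)|) * `|denq (c i)|)%N by rewrite divnK.
have K0 : ((D %/ `|denq (c i)|)%N%:R : algC) != 0.
  by rewrite pnatr_eq0 -lt0n divn_gt0 ?absz_gt0 ?denq_neq0 // dvdn_leq // /D prodn_gt0 // => j; rewrite absz_gt0 denq_neq0.
have q0 : (`|denq (c i)|%N%:R : algC) != 0 by rewrite pnatr_eq0 absz_eq0 denq_neq0.
rewrite [in RHS in _ / RHS]Dd natrM rmorphM /= -pmulrn /ratr.
have -> : ((denq (c i))%:~R : algC) = `|denq (c i)|%N%:R by rewrite natr_absz gtr0_norm ?denq_gt0.
field; by rewrite K0 q0.
Qed.
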